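(* Let $i\ge 3$ and $k\ge 3$ be integers. Then: (a) $n_1(F_i,F_{i+2},F_{i+k})=\tfrac12\bigl(3F_iF_{i+2}-F_i-F_{i+2}+1\bigr)$ whenever $k\ge i+2$; (b) for $k\in\{i,i+1\}$, $n_1(F_i,F_{i+2},F_{i+k})=\tfrac12\bigl(3F_iF_{i+2}-F_i-F_{i+2}+1\bigr)-(2F_i-F_k)F_{k-2}$; (c) if $r=\lfloor (F_i-1)/F_k\rfloor\ge 1$ (equivalently $k\le i-1$), then $$n_1(F_i,F_{i+2},F_{i+k})=\tfrac12\bigl((F_i+2F_k-1)F_{i+2}-F_i+1\bigr)-\Bigl(rF_i-\frac{(r-1)(r+2)}{2}F_k\Bigr)F_{k-2}.$$
   Context: Fibonacci numbers: $F_0=0$, $F_1=1$, $F_n=F_{n-1}+F_{n-2}$. For positive integers $a_1,\dots,a_l$ with $\gcd(a_1,\dots,a_l)=1$ and an integer $n$, let $d(n;a_1,\dots,a_l)$ be the number of tuples $(x_1,\dots,x_l)$ of nonnegative integers with $a_1x_1+\dots+a_lx_l=n$. For a nonnegative integer $p$, the $p$-Sylvester number $n_p(a_1,\dots,a_l)$ is the number of nonnegative integers $n$ with $d(n;a_1,\dots,a_l)\le p$. *)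

(* Defs.v *)
From mathcomp Require Import all_boot all_order all_algebra.
Set Implicit Arguments. Unset Strict Implicit. Unset Printing Implicit Defensive.

Fixpoint fib (n : nat) : nat :=
  match n with
  | 0 => 0
  | 1 => 1
  | (m.+1 as p).+1 => fib p + fib m
  end.

(* d(n; a_1,...,a_l): number of tuples (x_1,...,x_l) of nonnegative integers
   with a_1 x_1 + ... + a_l x_l = n.  The recursion peels off x_1, which
   ranges over 0..n (sufficient since all a_i are positive, as in the paper). *)
Fixpoint dcount (a : seq nat) (n : nat) : nat :=
  match a with
  | [::] => (n == 0) : nat
  | a1 :: s => \sum_(x < n.+1) (if a1 * x <= n then dcount s (n - a1 * x) else 0)
  end.

(* is_sylvester p a m : the p-Sylvester number n_p(a) exists (the set
   {n >= 0 | d(n; a) <= p} is finite) and equals m. *)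
Definition is_sylvester (p : nat) (a : seq nat) (m : nat) : Prop :=
  exists N : nat, (forall n, N <= n -> p < dcount a n) /\
                  m = count (fun n => dcount a n <= p) (iota 0 N).

(* Main.v *)
Require Import Defs.
From mathcomp Require Import all_boot all_order all_algebra zify ring lra.
Set Implicit Arguments. Unset Strict Implicit. Unset Printing Implicit Defensive.

Lemma widen_sum (F : nat -> nat) m N : m <= N -> (forall z, m < z -> F z = 0) ->
  \sum_(z < m.+1) F z = \sum_(z < N.+1) F z.
Proof.
move=> mN F0; rewrite -(big_mkord xpredT) -(big_mkord xpredT F).
have h1 : 0 <= m.+1 by []. have h2 : m.+1 <= N.+1 by [].
rewrite [RHS](big_cat_nat h1 h2) /= [X in _ + X]big1_seq ?addn0 //.
by move=> z /andP[_]; rewrite mem_iota => /andP[hz _]; apply: F0.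
Qed.

Lemma dcount_cons a1 s n : dcount (a1 :: s) n =
  \sum_(x < n.+1) (if a1 * x <= n then dcount s (n - a1 * x) else 0).
Proof. by []. Qed.

Lemma dc1 c m N : 0 < c -> m <= N -> dcount [:: c] m = \sum_(z < N.+1) (c*z == m : nat).
Proof.
move=> c0 mN /=; rewrite -(@widen_sum (fun z => (c*z == m : nat)) m N) //; last first.
  by move=> z hz; apply/eqP; rewrite eqb0; apply/eqP; nia.
apply: eq_bigr => z _; case: ifP => h; last by apply/esym/eqP; rewrite eqb0; apply/eqP; lia.
by congr nat_of_bool; apply/eqP/eqP; lia.
Qed.

Lemma dc2 b c m N : 0 < b -> 0 < c -> m <= N ->
  dcount [:: b; c] m = \sum_(y < N.+1) \sum_(z < N.+1) (b*y + c*z == m : nat).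
Proof.
move=> b0 c0 mN; rewrite dcount_cons -(@widen_sum (fun y => \sum_(z < N.+1) (b*y + c*z == m : nat)) m N) //; last first.
  move=> y hy; apply: big1 => z _; apply/eqP; rewrite eqb0; apply/eqP; nia.
apply: eq_bigr => y _; case: ifP => h; last first.
  by apply/esym/big1 => z _; apply/eqP; rewrite eqb0; apply/eqP; lia.
rewrite (dc1 (N:=N)) //; last by lia.
by apply: eq_bigr => z _; congr nat_of_bool; apply/eqP/eqP; lia.
Qed.

Definition Pr (a b c n y z : nat) : bool := (b*y + c*z <= n) && (a %| n - (b*y + c*z)).

Lemma dc3 a b c n : 0 < a -> 0 < b -> 0 < c ->
  dcount [:: a; b; c] n = \sum_(y < n.+1) \sum_(z < n.+1) (Pr a b c n y z : nat).
Proof.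
move=> a0 b0 c0.
have -> : dcount [:: a; b; c] n =
  \sum_(x < n.+1) \sum_(y < n.+1) \sum_(z < n.+1) (a*x + (b*y + c*z) == n : nat).
  rewrite dcount_cons; apply: eq_bigr => x _; case: ifP => h.
    rewrite (dc2 (N:=n)) //; last by lia.
    apply: eq_bigr => y _; apply: eq_bigr => z _; congr nat_of_bool; apply/eqP/eqP; lia.
  by apply/esym/big1 => y _; apply/big1 => z _; apply/eqP; rewrite eqb0; apply/eqP; lia.
rewrite exchange_big; apply: eq_bigr => y _; rewrite exchange_big; apply: eq_bigr => z _.
case h: (Pr a b c n y z); move: h; rewrite /Pr => h.
  case/andP: h => h1 /dvdnP [x hx].
  rewrite (bigD1 (inord x : 'I_n.+1)) //=.
  rewrite inordK; last by nia.
  rewrite big1 ?addn0; first by apply/eqP; rewrite eqb1; apply/eqP; lia.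
  move=> x' hx'; apply/eqP; rewrite eqb0; apply/negP => /eqP he.
  move: hx'; rewrite -val_eqE /= inordK; last by nia.
  have : a * x' = a * x by lia.
  by move/eqP; rewrite eqn_mul2l (negbTE (lt0n_neq0 a0)) /= => /eqP ->; rewrite eqxx.
apply: big1 => x _; apply/eqP; rewrite eqb0; apply/negP => /eqP he.
move: h; have -> : n - (b * y + c * z) = x * a by lia.
by rewrite dvdn_mull ?dvdnn // andbT; move/negP; apply; lia.
Qed.

Lemma sum_card n (P : nat -> nat -> bool) :
  \sum_(y < n.+1) \sum_(z < n.+1) (P y z : nat) =
  #|[pred p : 'I_n.+1 * 'I_n.+1 | P p.1 p.2]|.
Proof.
rewrite pair_bigA /= (eq_bigr (fun p : 'I_n.+1 * 'I_n.+1 => if P p.1 p.2 then 1 else 0)).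
  by rewrite -big_mkcond sum1_card.
by move=> p _; case: (P _ _).
Qed.

Lemma D_ge2 n (P : nat -> nat -> bool) y1 z1 y2 z2 :
  y1 <= n -> z1 <= n -> y2 <= n -> z2 <= n -> P y1 z1 -> P y2 z2 -> (y1, z1) != (y2, z2) ->
  1 < \sum_(y < n.+1) \sum_(z < n.+1) (P y z : nat).
Proof.
move=> h1 h2 h3 h4 p1 p2 ne; rewrite sum_card; apply/card_gt1P.
exists (inord y1, inord z1), (inord y2, inord z2).
rewrite !inE /= !inordK ?ltnS //; split => //.
apply: contra ne => /eqP [] /(congr1 val) /= e1 /(congr1 val) /= e2.
by move: e1 e2; rewrite !inordK ?ltnS // => -> ->.
Qed.

Lemma D_le1 n (P : nat -> nat -> bool) y0 z0 :
  (forall y z, P y z -> y = y0 /\ z = z0) ->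
  \sum_(y < n.+1) \sum_(z < n.+1) (P y z : nat) <= 1.
Proof.
move=> H; rewrite sum_card; apply/card_le1_eqP => [[y z] [y' z']]; rewrite !inE /=.
move=> /H [e1 e2] /H [e3 e4]; congr pair; apply: val_inj => /=; [rewrite e1 e3 | rewrite e2 e4] => //.
Qed.

Lemma count_iota_sum (P : pred nat) m n : count P (iota m n) = \sum_(j < n) P (m + j).
Proof.
elim: n m => [|n IH] m; first by rewrite big_ord0.
by rewrite /= big_ord_recl /= addn0 IH; congr addn; apply: eq_bigr => j _; rewrite addnS addSn.
Qed.

Lemma count_classes a Q (M : nat -> nat) (P : pred nat) : 0 < a ->
  (forall n, P n = (n < M (n %% a))) -> (forall j, j < a -> M j %% a = j) ->
  count P (iota 0 (a * Q)) = \sum_(j < a) minn (M j %/ a) Q.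
Proof.
move=> a0 HP HM; elim: Q => [|Q IH]; first by rewrite muln0 /=; apply/esym/big1 => j _; rewrite minn0.
rewrite mulnS addnC iotaD count_cat IH add0n count_iota_sum -big_split /=.
apply: eq_bigr => j _; rewrite HP.
have hj := ltn_ord j.
have -> : (a * Q + j) %% a = j by rewrite mulnC modnMDl modn_small.
have e := divn_eq (M j) a; rewrite HM // in e.
have -> : (a * Q + j < M j) = (Q < M j %/ a).
  by rewrite {1}e ltn_add2r [X in _ < X]mulnC ltn_pmul2l.
case: ltnP => h; lia.
Qed.

Lemma mod_cancel a g x y : coprime a g -> g*x = g*y %[mod a] -> x = y %[mod a].
Proof.
move=> co.
wlog xy : x y / x <= y.
  move=> H; case: (leqP x y) => h; first exact: H.
  by move=> e; apply/esym/H; [exact: ltnW | rewrite e].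
move/eqP; rewrite eq_sym eqn_mod_dvd; last by apply: leq_mul.
rewrite -mulnBr Gauss_dvdr // => hd.
by apply/esym/eqP; rewrite eqn_mod_dvd.
Qed.

Definition mval (a g K G t : nat) : nat :=
  if K <= t then t*(2*a+g) + G*a - (t %/ K)*G*a else (t+a)*(2*a+g) - ((t+a) %/ K)*G*a.

Lemma mval_ge a g K G t : 0 < a -> 0 < G -> 2*G <= K -> t < a -> K <= t ->
  mval a g K G t + (t %/ K)*G*a = t*(2*a+g) + G*a /\ 1 <= t %/ K /\ (t %/ K) * K <= t.
Proof.
move=> a0 G0 hGK ta Kt; rewrite /mval Kt.
have K0 : 0 < K by lia.
have q1 : 1 <= t %/ K by rewrite divn_gt0.
have qK : t %/ K * K <= t by apply: leq_divM.
have : t %/ K * G * 2 <= t by nia.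
move=> h; split; last by [].
have : t %/ K * G * a <= t * (2*a+g) by nia.
lia.
Qed.

Lemma mval_lt a g K G t : 0 < a -> 0 < G -> 2*G <= K -> t < a -> t < K ->
  mval a g K G t + ((t+a) %/ K)*G*a = (t+a)*(2*a+g) /\ ((t+a) %/ K) * K <= t + a.
Proof.
move=> a0 G0 hGK ta Kt; rewrite /mval leqNgt Kt /=.
have K0 : 0 < K by lia.
have qK : (t+a) %/ K * K <= t+a by apply: leq_divM.
have : (t+a) %/ K * G * 2 <= t + a by nia.
move=> h; split; last by [].
have : (t+a) %/ K * G * a <= (t+a) * (2*a+g) by nia.
lia.
Qed.


Lemma key_min a g K G c t y z : 0 < a -> 0 < G -> 2*G <= K -> c + G*a = K*(2*a+g) ->
  t < a -> (y + K*z) %% a = t -> (2*a+g)*y + c*z < mval a g K G t ->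
  y = t - K*(t%/K) /\ z = t%/K.
Proof.
move=> a0 G0 hGK hc ta hu hV.
have K0 : 0 < K by lia.
have e := divn_eq (y + K*z) a; rewrite hu in e.
move: e; set s := (y + K * z) %/ a => e.
move: hV; set V := (2*a+g)*y + c*z => hV.
have eV : V + G*a*z = (2*a+g)*(t + a*s).
  rewrite /V; have : c*z + G*a*z = K*(2*a+g)*z by rewrite -mulnDl hc.
  nia.
have h2 : 2*(G*z) <= K*z by rewrite mulnA leq_mul2r hGK orbT.
case: (leqP K t) => Kt.
  have [hm [q1 qK]] := mval_ge g a0 G0 hGK ta Kt.
  move: hm q1 qK; set q := t %/ K => hm q1 qK.
  case: s e eV => [|s] e eV.
    have zq : z <= q by rewrite leq_divRL //; lia.
    case: (ltnP z q) => zq'.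
      2: by (have ezq : z = q by lia); rewrite -ezq; split => //; lia.
    have : (z.+1)*(G*a) <= q*(G*a) by rewrite leq_mul2r zq' orbT.
    lia.
  have p0 : a <= s.+1 * a by rewrite leq_pmull.
  have hs : G*z <= a*s.+1 by lia.
  have p1 : a*(G*z) <= a*((2*a+g)*s.+1).
    rewrite leq_mul2l; apply/orP; right; apply: (leq_trans hs).
    by rewrite leq_mul2r; apply/orP; right; lia.
  have p2 : 1*(G*a) <= q*(G*a) by rewrite leq_mul2r q1 orbT.
  lia.
have [hm qK] := mval_lt g a0 G0 hGK ta Kt.
move: hm qK; set q := (t + a) %/ K => hm qK.
case: s e eV => [|[|s]] e eV.
- clear eV hV V; case: z e h2 hu => [|z] e h2 hu; last first.
    have : K <= K * z.+1 by rewrite leq_pmulr.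
    lia.
  have -> : t %/ K = 0 by rewrite divn_small.
  split; lia.
- have zq : z <= q by rewrite leq_divRL //; lia.
  have : z*(G*a) <= q*(G*a) by rewrite leq_mul2r zq orbT.
  lia.
- have hs2 : G*z <= (2*a+g)*s.+1 by lia.
  have : a*(G*z) <= a*((2*a+g)*s.+1) by rewrite leq_mul2l hs2 orbT.
  lia.
Qed.

Lemma vrel a g K G c y z : c + G*a = K*(2*a+g) ->
  (2*a+g)*y + c*z + G*a*z = (2*a+g)*(y + K*z).
Proof. move=> hc; have : c*z + G*a*z = K*(2*a+g)*z by rewrite -mulnDl hc. nia. Qed.

Lemma key_two a g K G c t : 0 < a -> 0 < G -> 2*G <= K -> c + G*a = K*(2*a+g) -> t < a ->
  exists y0 z0 y1 z1, [/\ (y0, z0) != (y1, z1), (y0 + K*z0) %% a = t, (y1 + K*z1) %% a = t,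
    (2*a+g)*y0 + c*z0 <= mval a g K G t & (2*a+g)*y1 + c*z1 = mval a g K G t].
Proof.
move=> a0 G0 hGK hc ta.
case: (leqP K t) => Kt.
  have [hm [q1 qK]] := mval_ge g a0 G0 hGK ta Kt.
  move: hm q1 qK; set q := t %/ K; case: q => [//|q] hm _ qK.
  exists (t - K*q.+1), q.+1, (t - K*q), q; split.
  - by apply/negP => /eqP [_]; lia.
  - by rewrite subnK ?modn_small //; lia.
  - by rewrite subnK ?modn_small //; lia.
  - have := @vrel a g K G c (t - K * q.+1) q.+1 hc; rewrite subnK; last by lia.
    lia.
  - have := @vrel a g K G c (t - K * q) q hc; rewrite subnK; last by lia.
    lia.
have [hm qK] := mval_lt g a0 G0 hGK ta Kt.
move: hm qK; set q := (t + a) %/ K => hm qK.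
exists t, 0, (t + a - K*q), q; split.
- apply/negP => /eqP [e1 e2]; move: e1; rewrite -e2 muln0 subn0; lia.
- by rewrite muln0 addn0 modn_small.
- rewrite subnK; last by lia.
  by rewrite modnDr modn_small.
- have h3 : 2*(q*G) <= q*K by rewrite mulnCA leq_mul2l hGK orbT.
  have hs : 2*(q*G) < 2*a by lia.
  have : a*(q*G) <= a*(2*a+g) by rewrite leq_mul2l; apply/orP; right; lia.
  have := @vrel a g K G c t 0 hc.
  lia.
- have := @vrel a g K G c (t + a - K * q) q hc; rewrite subnK; last by lia.
  lia.
Qed.

Lemma vmod a g K G c y z : c + G*a = K*(2*a+g) ->
  ((2*a+g)*y + c*z) %% a = (g*(y + K*z)) %% a.
Proof.
move=> hc; rewrite -(modnMDl (G*z)).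
have -> : G * z * a + ((2 * a + g) * y + c * z) = (2*(y+K*z))*a + g*(y + K*z).
  have := @vrel a g K G c y z hc; nia.
by rewrite modnMDl.
Qed.

Lemma Pr_class a g K G c n t y z : 0 < a -> coprime a g -> c + G*a = K*(2*a+g) -> t < a ->
  n %% a = (t*g) %% a ->
  Pr a (2*a+g) c n y z = ((2*a+g)*y + c*z <= n) && ((y + K*z) %% a == t).
Proof.
move=> a0 co hc ta hn; rewrite /Pr; case: leqP => //= hv.
rewrite -eqn_mod_dvd // (vmod _ _ hc) hn; apply/eqP/eqP => h.
  by rewrite -(modn_small ta); apply: (mod_cancel co); rewrite -h mulnC.
by rewrite -[in RHS]modnMmr h mulnC.
Qed.

Lemma struct a g K G c n t : 0 < a -> 0 < G -> 2*G <= K -> coprime a g -> 0 < c ->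
  c + G*a = K*(2*a+g) -> t < a -> n %% a = (t*g) %% a ->
  (dcount [:: a; 2*a+g; c] n <= 1) = (n < mval a g K G t).
Proof.
move=> a0 G0 hGK co c0 hc ta hn.
rewrite dc3 //; last by lia.
apply/idP/idP.
  apply: contraLR; rewrite -leqNgt -ltnNge => hmn.
  have [y0 [z0 [y1 [z1 [ne e0 e1 v0 v1]]]]] := key_two a0 G0 hGK hc ta.
  have b1 : y0 <= (2*a+g)*y0 by rewrite leq_pmull //; lia.
  have b2 : y1 <= (2*a+g)*y1 by rewrite leq_pmull //; lia.
  have b3 : z0 <= c*z0 by rewrite leq_pmull.
  have b4 : z1 <= c*z1 by rewrite leq_pmull.
  apply: (@D_ge2 n (Pr a (2*a+g) c n) y0 z0 y1 z1) => //; try lia;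
    rewrite (@Pr_class a g K G c n t) // ?e0 ?e1 eqxx andbT; lia.
move=> hnm.
apply: (@D_le1 n (Pr a (2*a+g) c n) (t - K*(t%/K)) (t %/ K)) => y z.
rewrite (@Pr_class a g K G c n t) // => /andP [hv /eqP ht].
apply: (key_min a0 G0 hGK hc ta ht); lia.
Qed.

Lemma mval_bound a g K G t : 0 < a -> 0 < G -> 2*G <= K -> t < a ->
  mval a g K G t < a * (2*(2*a+g) + 1).
Proof.
move=> a0 G0 hGK ta; case: (leqP K t) => Kt.
  have [hm [q1 qK]] := mval_ge g a0 G0 hGK ta Kt.
  have : 1*(G*a) <= t %/ K * (G*a) by rewrite leq_mul2r q1 orbT.
  have : t*(2*a+g) <= a*(2*a+g) by rewrite leq_mul2r; apply/orP; right; lia.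
  lia.
have [hm qK] := mval_lt g a0 G0 hGK ta Kt.
have : (t+a)*(2*a+g) <= (2*a)*(2*a+g) by rewrite leq_mul2r; apply/orP; right; lia.
move: hm; generalize ((t + a) %/ K) (mval a g K G t) => q m hm; lia.
Qed.

Lemma mval_mod a g K G c t : 0 < a -> 0 < G -> 2*G <= K -> c + G*a = K*(2*a+g) -> t < a ->
  mval a g K G t %% a = (t*g) %% a.
Proof.
move=> a0 G0 hGK hc ta.
have [y0 [z0 [y1 [z1 [_ _ e1 _ v1]]]]] := key_two a0 G0 hGK hc ta.
by rewrite -v1 (vmod _ _ hc) -modnMmr e1 mulnC.
Qed.

Lemma sylv a g K G c : 0 < a -> 0 < G -> 2*G <= K -> coprime a g -> 0 < c ->
  c + G*a = K*(2*a+g) ->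
  is_sylvester 1 [:: a; 2*a+g; c] (\sum_(t < a) mval a g K G t %/ a).
Proof.
move=> a0 G0 hGK co c0 hc.
pose f (t : 'I_a) : 'I_a := Ordinal (ltn_pmod (t*g) a0).
have finj : injective f.
  move=> t t' /(congr1 val) /= e; apply: val_inj => /=.
  rewrite -(modn_small (ltn_ord t)) -(modn_small (ltn_ord t')).
  by apply: (mod_cancel co); rewrite mulnC e mulnC.
have fsurj := inj_card_onto finj (leqnn _).
pose M (j : nat) := match [pick t : 'I_a | (t*g) %% a == j] with
                    | Some t => mval a g K G t | None => 0 end.
pose Q := 2*(2*a+g) + 1.
have HP : forall n, (dcount [:: a; 2*a+g; c] n <= 1) = (n < M (n %% a)).
  move=> n; rewrite /M; case: pickP => [t /eqP ht | hnone].
    by apply: (struct a0 G0 hGK co c0 hc (ltn_ord t)).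
  have := fsurj (Ordinal (ltn_pmod n a0)); case/codomP => t /(congr1 val) /= e.
  by move: (hnone t) => /=; rewrite e eqxx.
have HM : forall j, j < a -> M j %% a = j.
  move=> j ja; rewrite /M; case: pickP => [t /eqP ht | hnone].
    by rewrite (mval_mod a0 G0 hGK hc (ltn_ord t)) ht.
  have := fsurj (Ordinal ja); case/codomP => t /(congr1 val) /= e.
  by move: (hnone t) => /=; rewrite e eqxx.
have HB : forall j, M j < a * Q.
  move=> j; rewrite /M; case: pickP => [t _ | _]; last by rewrite muln_gt0 a0 /Q addn1.
  exact: mval_bound a0 G0 hGK (ltn_ord t).
exists (a * Q); split.
  move=> n hn; rewrite ltnNge HP -leqNgt.
  by apply: (leq_trans (ltnW (HB _))).
rewrite (count_classes Q a0 HP HM).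
rewrite [RHS](reindex_inj finj) /=; apply: eq_bigr => t _.
have -> : M ((t*g) %% a) = mval a g K G t.
  rewrite /M; case: pickP => [t' /eqP ht' | hnone]; last by move: (hnone t); rewrite eqxx.
  by have -> : t' = t by apply: finj; apply: val_inj.
apply/esym/minn_idPl; apply: ltnW; rewrite ltn_divLR // mulnC.
exact: mval_bound a0 G0 hGK (ltn_ord t).
Qed.

Definition hv (a g K G t : nat) :=
  if K <= t then 2*t + G - (t%/K)*G else 2*t + 2*a + g - ((t+a)%/K)*G.
Definition Xv (a K t : nat) := if K <= t then t%/K else (t+a)%/K.
Definition Yv (a g K G t : nat) := if K <= t then G else 2*a+g.

Lemma hv_rel a g K G t : 0 < a -> 0 < G -> 2*G <= K -> t < a ->
  hv a g K G t + G * Xv a K t = 2*t + Yv a g K G t /\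
  mval a g K G t = hv a g K G t * a + t * g.
Proof.
move=> a0 G0 hGK ta; rewrite /hv /Xv /Yv; case: (leqP K t) => Kt.
  have [hm [q1 qK]] := mval_ge g a0 G0 hGK ta Kt.
  move: hm q1 qK; generalize (t %/ K) (mval a g K G t) => q m hm q1 qK.
  have h1 : 2*(q*G) <= q*K by rewrite mulnCA leq_mul2l hGK orbT.
  have e : 2 * t + G - q * G + q*G = 2*t + G by lia.
  split; first lia.
  have := congr1 (muln^~ a) e; move: (2 * t + G - q * G) => h /= eh.
  nia.
have [hm qK] := mval_lt g a0 G0 hGK ta Kt.
move: hm qK; generalize ((t + a) %/ K) (mval a g K G t) => q m hm qK.
have h1 : 2*(q*G) <= q*K by rewrite mulnCA leq_mul2l hGK orbT.
have e : 2 * t + 2*a + g - q * G + q*G = 2*t + 2*a + g by lia.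
split; first lia.
have := congr1 (muln^~ a) e; move: (2 * t + 2*a + g - q * G) => h /= eh.
nia.
Qed.

Lemma pair_floor a g u : coprime a g -> 0 < u -> u < a ->
  (u*g) %/ a + ((a-u)*g) %/ a = g - 1.
Proof.
move=> co u0 ua.
have a0 : 0 < a by lia.
have e := divn_eq (u*g) a.
move: e; set q := (u*g) %/ a; set r := (u*g) %% a => e.
have ra : r < a by rewrite /r ltn_mod.
have r0 : 0 < r.
  rewrite lt0n; apply/negP => /eqP r0.
  have : a %| u * g by rewrite /dvdn -/r r0.
  rewrite Gauss_dvdl // => /(dvdn_leq u0); lia.
have qg : q < g.
  have : u * g < a * g.
    rewrite ltn_mul2r ua andbT lt0n; apply/negP => /eqP g0.
    by move: e; rewrite g0 muln0 => e; lia.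
  have : q * a <= u * g by lia.
  move=> h1 h2; have : q * a < g * a by lia.
  by rewrite ltn_mul2r => /andP [].
have -> : (a - u) * g = (g - q - 1) * a + (a - r).
  move: qg e ra; generalize q r => q0 r0' qg e ra'.
  have [w hw] : exists w, g = q0 + 1 + w by exists (g - q0 - 1); lia.
  have [v hv] : exists v, a = u + v by exists (a - u); lia.
  subst g a; rewrite addKn.
  have -> : q0 + 1 + w - q0 - 1 = w by lia.
  nia.
rewrite divnMDl // divn_small; lia.
Qed.

Lemma floor_sum a g : coprime a g -> 0 < a -> 0 < g ->
  2 * (\sum_(t < a) (t*g) %/ a) + a + g = a*g + 1.
Proof.
move=> co a0 g0.
rewrite -(big_mkord xpredT (fun t => (t*g) %/ a)) big_ltn // mul0n div0n add0n.
set T := \sum_(1 <= t < a) _.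
have eT : 2 * T = (a - 1) * (g - 1).
  rewrite mul2n -addnn {2}/T big_nat_rev /T -big_split /=.
  rewrite -sum_nat_const_nat; apply: eq_big_nat => t /andP [h1 h2].
  have -> : 1 + a - t.+1 = a - t by lia.
  by rewrite pair_floor //; lia.
nia.
Qed.

Lemma tri_sum n : \sum_(t < n) 2*t + n = n*n.
Proof.
rewrite -(big_mkord xpredT (fun t => 2*t)).
elim: n => [|n IH]; first by rewrite big_geq.
rewrite big_nat_recr //=; lia.
Qed.

Lemma hermite K a : 0 < K -> \sum_(0 <= t < K) (t + a) %/ K = a.
Proof.
move=> K0; elim: a => [|a IH].
  by rewrite big_nat_cond big1 // => t /andP [/andP [_ h] _]; rewrite addn0 divn_small.
have E : \sum_(0 <= t < K.+1) (t + a) %/ K = (0 + a) %/ K + \sum_(0 <= t < K) (t.+1 + a) %/ K.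
  by rewrite big_nat_recl.
have E2 : \sum_(0 <= t < K.+1) (t + a) %/ K = \sum_(0 <= t < K) (t + a) %/ K + (K + a) %/ K.
  by rewrite big_nat_recr.
rewrite IH in E2.
have FK : (K + a) %/ K = a %/ K + 1 by rewrite divnDl ?dvdnn // divnn K0 addnC.
rewrite (eq_bigr (fun t => (t.+1 + a) %/ K)); last by move=> t _; rewrite addnS addSn.
move: E E2; rewrite FK add0n; lia.
Qed.

Lemma q1_sum K r j : 0 < K -> j <= K ->
  2 * (\sum_(0 <= t < r*K + j) t %/ K) + K*r = K*r*r + 2*r*j.
Proof.
move=> K0; elim: r j => [|r IH] j hj.
  rewrite mul0n add0n big_nat_cond big1 ?muln0 //.
  by move=> t /andP [/andP [_ h] _]; rewrite divn_small //; lia.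
change (2 * (\sum_(0 <= t < r.+1*K + j) t %/ K) + K*r.+1 = K*r.+1*r.+1 + 2*r.+1*j).
suff E : \sum_(0 <= t < r.+1*K + j) t %/ K = \sum_(0 <= t < r*K + K) t %/ K + j * r.+1.
  rewrite E; have := IH K (leqnn K).
  move: (\sum_(0 <= t < r * K + K) t %/ K) => S; lia.
have h0 : 0 <= r*K + K by [].
have h1 : r*K + K <= r.+1*K + j by rewrite mulSn; lia.
rewrite (big_cat_nat h0 h1); congr addn.
have -> : \sum_(r * K + K <= t < r.+1 * K + j) t %/ K = \sum_(r * K + K <= t < r.+1 * K + j) r.+1.
  apply: eq_big_nat => t /andP [ht1 ht2].
  have et : t = r.+1 * K + (t - r.+1 * K) by rewrite mulSn in ht1 *; lia.
  rewrite {1}et divnMDl // divn_small ?addn0 //; rewrite mulSn in ht1 ht2 *; lia.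
rewrite sum_nat_const_nat; congr muln; rewrite mulSn; lia.
Qed.

Lemma nbase a g K G : 0 < a -> 0 < g -> 0 < G -> 2*G <= K -> coprime a g ->
  2 * (\sum_(t < a) mval a g K G t %/ a) + 2*G*(\sum_(t < a) Xv a K t) + 3*a + g
  = 2*a*a + 2*(\sum_(t < a) Yv a g K G t) + a*g + 1.
Proof.
move=> a0 g0 G0 hGK co.
have E1 : \sum_(t < a) mval a g K G t %/ a = \sum_(t < a) hv a g K G t + \sum_(t < a) (t*g) %/ a.
  rewrite -big_split; apply: eq_bigr => t _ /=.
  have [_ ->] := @hv_rel a g K G t a0 G0 hGK (ltn_ord t).
  by rewrite divnMDl.
have E2 : \sum_(t < a) hv a g K G t + G * \sum_(t < a) Xv a K t = \sum_(t < a) 2*t + \sum_(t < a) Yv a g K G t.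
  rewrite big_distrr -!big_split; apply: eq_bigr => t _ /=.
  by have [-> _] := @hv_rel a g K G t a0 G0 hGK (ltn_ord t).
have E3 := floor_sum co a0 g0.
have E4 := tri_sum a.
rewrite E1; move: E2 E3 E4.
move: (\sum_(t < a) hv a g K G t) (\sum_(t < a) (t*g) %/ a) (\sum_(t < a) Xv a K t)
  (\sum_(t < a) 2*t) (\sum_(t < a) Yv a g K G t) => A B C D E.
lia.
Qed.

Lemma sum_ord_const n x : \sum_(t < n) x = n * x.
Proof. by rewrite -(big_mkord xpredT (fun _ => x)) sum_nat_const_nat subn0. Qed.

Lemma sums_bigK a g K G : 0 < a -> 2*a <= K ->
  \sum_(t < a) Xv a K t = 0 /\ \sum_(t < a) Yv a g K G t = a*(2*a+g).
Proof.
move=> a0 hK; split.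
  apply: big1 => t _; have ht := ltn_ord t; rewrite /Xv leqNgt (_ : t < K) /=; last by lia.
  by rewrite divn_small //; lia.
rewrite (eq_bigr (fun _ => 2*a+g)) ?sum_ord_const //.
by move=> t _; have ht := ltn_ord t; rewrite /Yv leqNgt (_ : t < K) //; lia.
Qed.

Lemma sums_Ka a g G : 0 < a ->
  \sum_(t < a) Xv a a t = a /\ \sum_(t < a) Yv a g a G t = a*(2*a+g).
Proof.
move=> a0; split.
  rewrite (eq_bigr (fun _ => 1)) ?sum_ord_const ?muln1 //.
  move=> t _; have ht := ltn_ord t; rewrite /Xv leqNgt ht /=.
  by rewrite divnDr ?dvdnn // divnn a0 divn_small.
rewrite (eq_bigr (fun _ => 2*a+g)) ?sum_ord_const //.
by move=> t _; have ht := ltn_ord t; rewrite /Yv leqNgt ht.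
Qed.

Lemma sums_Kag a g G : 0 < g -> g < a ->
  \sum_(t < a) Xv a (a+g) t = a - g /\ \sum_(t < a) Yv a g (a+g) G t = a*(2*a+g).
Proof.
move=> g0 ga; split.
  rewrite (eq_bigr (fun t : 'I_a => (g <= t : nat))); last first.
    move=> t _; have ht := ltn_ord t; rewrite /Xv leqNgt (_ : t < a + g) /=; last by lia.
    case: leqP => h.
      have -> : t + a = 1 * (a + g) + (t - g) by lia.
      by rewrite divnMDl ?divn_small //; lia.
    by rewrite divn_small //; lia.
  rewrite -(big_mkord xpredT (fun t => (g <= t : nat))).
  have h0 : 0 <= g by []. have h1 : g <= a by lia.
  rewrite (big_cat_nat h0 h1) /= big_nat_cond big1; last first.
    by move=> t /andP [/andP [_ h] _]; rewrite leqNgt h.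
  rewrite (eq_big_nat _ _ (F2 := fun _ => 1)) ?sum_nat_const_nat ?muln1 //.
  by move=> t /andP [h _]; rewrite h.
rewrite (eq_bigr (fun _ => 2*a+g)) ?sum_ord_const //.
by move=> t _; have ht := ltn_ord t; rewrite /Yv leqNgt (_ : t < a + g) //; lia.
Qed.

Lemma sums_small a g K G : 0 < K -> K < a ->
  \sum_(t < a) Xv a K t = a + \sum_(0 <= t < a) t %/ K /\
  \sum_(t < a) Yv a g K G t = K*(2*a+g) + (a - K)*G.
Proof.
move=> K0 Ka.
have h0 : 0 <= K by []. have h1 : K <= a by lia.
rewrite -(big_mkord xpredT (Xv a K)) -(big_mkord xpredT (Yv a g K G)).
rewrite !(big_cat_nat h0 h1) /=.
have z : \sum_(0 <= t < K) t %/ K = 0.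
  by rewrite big_nat_cond big1 // => t /andP [/andP [_ h] _]; rewrite divn_small.
split.
  rewrite z add0n; congr addn.
    by rewrite -[RHS](hermite a K0); apply: eq_big_nat => t /andP [_ h]; rewrite /Xv leqNgt h.
  by apply: eq_big_nat => t /andP [h _]; rewrite /Xv h.
rewrite (eq_big_nat _ _ (F2 := fun _ => 2*a+g)); last first.
  by move=> t /andP [_ h]; rewrite /Yv leqNgt h.
rewrite [X in _ + X = _](eq_big_nat _ _ (F2 := fun _ => G)); last first.
  by move=> t /andP [h _]; rewrite /Yv h.
by rewrite !sum_nat_const_nat subn0.
Qed.

Lemma fibSS n : fib n.+2 = fib n.+1 + fib n. Proof. by []. Qed.

Lemma fib_mono n : fib n <= fib n.+1.
Proof. by case: n => // n; rewrite fibSS leq_addr. Qed.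

Lemma fib_leq m n : m <= n -> fib m <= fib n.
Proof.
move=> /subnK <-; elim: (n - m) => // d IH; rewrite addSn; exact: leq_trans IH (fib_mono _).
Qed.

Lemma fib_pos n : 0 < n -> 0 < fib n.
Proof. by move=> n0; apply: leq_trans (fib_leq n0). Qed.

Lemma fib_coprime n : coprime (fib n.+1) (fib n).
Proof.
elim: n => [|n IH]; first by [].
by rewrite /coprime fibSS gcdnC gcdnDl.
Qed.

Lemma fib_addk i k : fib (i + k).+2 + fib k * fib i = fib k.+2 * fib i.+2.
Proof.
suff : (fib (i + k).+2 + fib k * fib i = fib k.+2 * fib i.+2) /\
       (fib (i + k.+1).+2 + fib k.+1 * fib i = fib k.+3 * fib i.+2) by case.
have f0 : fib 0 = 0 by []. have f1 : fib 1 = 1 by [].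
have f2 : fib 2 = 1 by []. have f3 : fib 3 = 2 by [].
elim: k => [|k [IH1 IH2]].
  rewrite !addn0 addn1 ?f0 ?f1 ?f2 ?f3 (fibSS i.+1) (fibSS i); split; lia.
split; first by [].
rewrite !addnS in IH2 *.
rewrite (fibSS (i+k).+2) (fibSS k.+2) (fibSS k).
rewrite (fibSS k) in IH1.
lia.
Qed.
Unset Implicit Arguments.
Import GRing.Theory Num.Theory.
Local Open Scope ring_scope.
Theorem theorem10 (i k : nat) (hi : (3 <= i)%N) (hk : (3 <= k)%N) :
  let F := fun j => (fib j)%:R : rat in
  let base := (3%:R * F i * F (i + 2)%N - F i - F (i + 2)%N + 1) / 2%:R in
  [/\ ((i + 2 <= k)%N ->
        exists m : nat, is_sylvester 1 [:: fib i; fib (i + 2); fib (i + k)] m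
                        /\ m%:R = base),
      ((k == i) || (k == i.+1) ->
        exists m : nat, is_sylvester 1 [:: fib i; fib (i + 2); fib (i + k)] m
                        /\ m%:R = base - (2%:R * F i - F k) * F (k - 2)%N) &
      (let r := ((fib i).-1 %/ fib k)%N in (1 <= r)%N ->
        exists m : nat, is_sylvester 1 [:: fib i; fib (i + 2); fib (i + k)] m
                        /\ m%:R = ((F i + 2%:R * F k - 1) * F (i + 2)%N - F i + 1) / 2%:R
                                  - (r%:R * F i - ((r%:R - 1) * (r%:R + 2%:R)) / 2%:R * F k)
                                    * F (k - 2)%N)].
Proof.
move=> F base.
have [i' ei] : exists i', i = i'.+1 by exists i.-1; lia.
have [k' ek] : exists k', k = k'.+2 by exists (k-2)%N; lia.
have ga : (fib i' < fib i)%N.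
  rewrite ei; case: i' ei => [|[|i']] ei; try lia.
  by have := @fib_pos i'.+1 (ltn0Sn i'); rewrite (fibSS i'.+1); lia.
have g0 : (0 < fib i')%N by apply: fib_pos; lia.
have a0 : (0 < fib i)%N by lia.
have eb : fib (i + 2) = (2 * fib i + fib i')%N.
  by rewrite ei addn2 fibSS fibSS; lia.
have G0 : (0 < fib (k - 2))%N by apply: fib_pos; lia.
have hGK : (2 * fib (k - 2) <= fib k)%N.
  rewrite ek (_ : (k'.+2 - 2)%N = k'); last by lia.
  rewrite fibSS; have := fib_mono k'; lia.
have hc : (fib (i + k) + fib (k - 2) * fib i = fib k * (2 * fib i + fib i'))%N.
  rewrite -eb ek (_ : (k'.+2 - 2)%N = k'); last by lia.
  by rewrite addnS addnS fib_addk addn2.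
have co : coprime (fib i) (fib i') by rewrite ei fib_coprime.
have c0 : (0 < fib (i + k))%N by apply: fib_pos; lia.
have HS := sylv a0 G0 hGK co c0 hc.
have nb := nbase a0 g0 G0 hGK co.
move: HS nb; rewrite -eb.
set a := fib i in ga a0 eb hc co c0 *.
set g := fib i' in ga g0 eb hc co *.
set K := fib k in hGK hc *.
set G := fib (k - 2) in G0 hGK hc *.
set n := (\sum_(t < a) mval a g K G t %/ a)%N => HS nb.
rewrite /base /F -/a -/K -/G eb.
split.
- move=> hki; exists n; split; first by rewrite -eb.
  have hK : (2 * a <= K)%N.
    have := fib_leq hki; rewrite eb -/K; lia.
  have [sx sy] := sums_bigK g G a0 hK; rewrite sx sy in nb.
  move: nb => /(congr1 (fun x => x%:R : rat)); rewrite !(natrD, natrM) => e.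
  clear -e; lra.
- case/orP => /eqP hki; exists n; (split; first by rewrite -eb).
    have hK : K = a by rewrite /K hki.
    rewrite hK in nb *.
    have [sx sy] := sums_Ka g G a0; rewrite sx sy in nb.
    move: nb => /(congr1 (fun x => x%:R : rat)); rewrite !(natrD, natrM) => e.
    clear -e; lra.
  have hK : K = (a + g)%N by rewrite /K /a /g hki ei fibSS.
  rewrite hK in nb *.
  have [sx sy] := @sums_Kag a g G g0 ga; rewrite sx sy in nb.
  move: nb => /(congr1 (fun x => x%:R : rat)); rewrite !(natrD, natrM) natrB; last by apply: ltnW.
  move=> e.
  clear -e; lra.
- move=> hr; set r := (a.-1 %/ K)%N in hr *; exists n; split; first by rewrite -eb.
  have K0 : (0 < K)%N by lia.
  have Ka : (K < a)%N by move: hr; rewrite /r leq_divRL // mul1n; lia.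
  have [sx sy] := @sums_small a g K G K0 Ka; rewrite sx in nb.
  have sy' : (\sum_(t < a) Yv a g K G t + K * G = K * (2*a+g) + a * G)%N.
    rewrite sy; have : (K * G <= a * G)%N by rewrite leq_mul2r ltnW ?orbT.
    lia.
  set j := ((a.-1) %% K).+1.
  have hj : (j <= K)%N by rewrite /j ltn_mod.
  have ea : a = (r * K + j)%N by rewrite /j /r addnS -divn_eq; lia.
  have q1 := q1_sum r K0 hj; rewrite -ea in q1.
  move: nb sy' q1; set Q := (\sum_(0 <= t < a) t %/ K)%N; set Y := (\sum_(t < a) Yv a g K G t)%N.
  move=> nb sy' q1.
  have e4 : (G * (2 * Q + K * r) + 2*G*r*(r*K) = G * (K * r * r) + 2*G*r*a)%N.
    by rewrite q1 [in RHS]ea; nia.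
  move: nb sy' e4 => /(congr1 (fun x => x%:R : rat)) e1 /(congr1 (fun x => x%:R : rat)) e2
    /(congr1 (fun x => x%:R : rat)) e3.
  rewrite !(natrD, natrM) in e1 e2 e3.
  rewrite !(natrD, natrM); clear -e1 e2 e3; lra.
Qed.
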